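(* Let $\mu$ be the Cauchy distribution $d\mu(x)=\frac1\pi\frac{dx}{1+x^2}$ and $t>0$. For each $u\in\mathbb R$, $v_{t}(u)$ is the unique positive number $v$ satisfying \[u^2=\frac1v(1+v)(t-v-v^2).\] Consequently $u$ and $\frac{dv_t}{du}(u)$ have opposite sign; in particular $v_t$ is unimodal with peak at $0$, and $v_t(0)=\frac{-1+\sqrt{1+4t}}{2}$.
   Context: $v_t(u)=\inf\{v>0:\int\frac{d\mu(x)}{(u-x)^2+v^2}\le\frac1t\}$ for $u\in\mathbb R$. *)

(* Defs.v *)
From HB Require Import structures.
From mathcomp Require Import all_boot all_order all_algebra.
From mathcomp Require Import all_classical all_reals all_analysis.
Set Implicit Arguments. Unset Strict Implicit. Unset Printing Implicit Defensive.
Import Order.TTheory GRing.Theory Num.Theory.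
Local Open Scope classical_set_scope.
Local Open Scope ring_scope.

Definition cauchy_density (R : realType) (x : R) : R := (pi * (1 + x ^+ 2))^-1.

Definition cauchy_G (R : realType) (u v : R) : \bar R :=
  (\int[@lebesgue_measure R]_(x in setT)
     ((cauchy_density x / ((u - x) ^+ 2 + v ^+ 2))%:E))%E.

Definition v_t (R : realType) (t u : R) : R :=
  inf [set v : R | 0 < v /\ (cauchy_G u v <= (t^-1)%:E)%E].

(* Main.v *)
Require Import Defs.
From HB Require Import structures.
From mathcomp Require Import all_boot all_order all_algebra.
From mathcomp Require Import all_classical all_reals all_analysis.
From mathcomp Require Import measurable_realfun.
From mathcomp Require Import ring lra.
Import Order.TTheory GRing.Theory Num.Theory.
Local Open Scope classical_set_scope.
Local Open Scope ring_scope.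

Module Helpers.
Set Implicit Arguments. Unset Strict Implicit. Unset Printing Implicit Defensive.
Import numFieldNormedType.Exports.

Section S.
Variable R : realType.


Notation mu := (@lebesgue_measure R).
Lemma sc (p q : R) : p *: q = p * q. Proof. by []. Qed.

Lemma cvg_invy : (fun x : R => x^-1) @ +oo --> (0:R).
Proof.
have := @gtr0_cvgV0 R R (+oo%R) _ id.
move=> ->; first exact: cvg_id.
by apply: filterS (@nbhs_pinfty_gt R 0 _) => //; rewrite num_real.
Unshelve. all: by end_near. Qed.

Lemma cvg_lnPQ (a b : R) : 0 < b ->
  (fun x => ln (1 + x^+2) - ln ((x - a)^+2 + b^+2)) @ +oo --> (0:R).
Proof.
move=> b0.
pose g := fun y : R => (1 + y^+2) * ((1 - a * y)^+2 + (b * y)^+2)^-1.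
have g0 : g 0 = 1 by rewrite /g !mulr0 subr0 expr1n expr0n /= addr0 invr1 mulr1.
have cg : g y @[y --> (0:R)] --> g 0.
  have Q00 : (1 - a * 0)^+2 + (b * 0)^+2 != 0 :> R.
    by rewrite !mulr0 subr0 expr1n expr0n /= addr0 oner_neq0.
  have dV := @is_deriveV R (fun y => (1 - a * y)^+2 + (b * y)^+2) 0 _ 1 Q00.
  have dg : derivable g 0 1 by apply: ex_derive.
  exact/differentiable_continuous/derivable1_diffP.
have cl : ln y @[y --> g 0] --> ln (g 0).
  by apply: continuous_ln; rewrite g0 ltr01.
have : ((@ln R) \o g \o (fun x : R => x^-1)) @ +oo --> ln (g 0).
  apply: cvg_comp; first exact: cvg_invy.
  exact: cvg_comp cg cl.
rewrite g0 ln1.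
apply: cvg_trans; apply: near_eq_cvg.
near=> x.
have x0 : 0 < x by near: x; apply: nbhs_pinfty_gt; rewrite num_real.
have P0 : 0 < 1 + x^+2 by rewrite ltr_pwDl // sqr_ge0.
have Q0 : 0 < (x - a)^+2 + b^+2 by rewrite ltr_wpDl ?sqr_ge0 // exprn_gt0.
rewrite /= -lnV ?posrE // -lnM ?posrE ?invr_gt0 //; congr (ln _).
rewrite /g; field.
by rewrite !gt_eqF.
Unshelve. all: by end_near. Qed.
Definition FF (a b x : R) := pi^-1 * ((a * (ln (1 + x^+2) - ln ((x - a)^+2 + b^+2))
  + (a^+2 + b^+2 - 1) * atan x
  + (2 * a^+2 - (a^+2 + b^+2 - 1)) / b * atan ((x - a) / b))
  / ((a^+2 + b^+2 - 1)^+2 + 4 * a^+2)).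


Lemma cvg_atanQ (a b : R) : 0 < b -> atan ((x - a) / b) @[x --> +oo] --> pi / 2.
Proof.
move=> b0; apply: (cvg_comp (fun x => (x - a) / b) (@atan R) _ (@cvgy_atan R)).
apply/cvgryPge => A; near=> x.
rewrite ler_pdivlMr // lerBrDr; near: x; apply: nbhs_pinfty_ge; rewrite num_real.
Unshelve. all: by end_near. Qed.

Lemma cvgFF (a b : R) : 0 < b -> FF a b x @[x --> +oo] -->
  pi^-1 * ((a * 0 + (a^+2 + b^+2 - 1) * (pi / 2)
  + (2 * a^+2 - (a^+2 + b^+2 - 1)) / b * (pi / 2))
  / ((a^+2 + b^+2 - 1)^+2 + 4 * a^+2)).
Proof.
move=> b0; rewrite /FF.
apply: cvgMl_tmp. apply: cvgMr_tmp.
apply: cvgD; [apply: cvgD|].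
- apply: cvgMl_tmp; exact: cvg_lnPQ.
- apply: cvgMl_tmp; exact: cvgy_atan.
- apply: cvgMl_tmp; exact: cvg_atanQ.
Qed.
Lemma d_ln (g : R -> R) (x dg : R) : 0 < g x -> is_derive x 1 g dg ->
  is_derive x 1 (fun y => ln (g y)) ((g x)^-1 * dg).
Proof. by move=> gx dgx; exact: (is_derive1_comp (is_derive1_ln gx) dgx). Qed.

Lemma d_atan (g : R -> R) (x dg : R) : is_derive x 1 g dg ->
  is_derive x 1 (fun y => atan (g y)) ((1 + g x ^+ 2)^-1 * dg).
Proof. by move=> dgx; exact: (is_derive1_comp (is_derive1_atan (g x)) dgx). Qed.

Lemma dFF (a b x : R) : 0 < b -> (a^+2 + b^+2 - 1)^+2 + 4 * a^+2 != 0 ->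
  is_derive x 1 (FF a b) ((pi * (1 + x^+2))^-1 / ((a - x)^+2 + b^+2)).
Proof.
move=> b0 K0.
have P0 : 0 < 1 + x^+2 by rewrite ltr_pwDl // sqr_ge0.
have Q0 : 0 < (x - a)^+2 + b^+2 by rewrite ltr_wpDl ?sqr_ge0 // exprn_gt0.
have H1 := @d_ln (fun y => 1 + y^+2) x _ P0 _.
have H2 := @d_ln (fun y => (y - a)^+2 + b^+2) x _ Q0 _.
have H3 := @d_atan (fun y => (y - a) / b) x _ _.
rewrite /FF; apply: is_derive_eq.
rewrite !sc.
have pi0 : pi != 0 :> R by rewrite gt_eqF // pi_gt0.
move: pi0; generalize (@pi R) => p pi0.
field; apply/and5P; split => //; last by rewrite gt_eqF.
- by rewrite -opprB sqrrN gt_eqF.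
- by rewrite gt_eqF.

Qed.
Lemma ftc0 (g G : R -> R) (l : R) : (forall x, 0 <= g x) -> continuous g ->
  (forall x : R, is_derive x 1 G (g x)) -> G x @[x --> +oo%R] --> l ->
  (\int[mu]_(x in `[0%R, +oo[) (g x)%:E = (l - G 0)%:E)%E.
Proof.
move=> g0 cg dG Gl; rewrite EFinB; apply: ge0_continuous_FTC2y => //.
- exact: continuous_subspaceT.
- apply: cvg_at_right_filter; apply: differentiable_continuous.
  by apply/derivable1_diffP; case: (dG 0).
- by move=> x _; rewrite derive1E derive_val.
Qed.
Lemma intR (f : R -> R) : (forall x, 0 <= f x) -> continuous f ->
  (\int[mu]_(x in setT) (f x)%:E = \int[mu]_(x in `[0%R, +oo[) (f x)%:E
     + \int[mu]_(x in `[0%R, +oo[) (f (- x))%:E)%E.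
Proof.
move=> f0 cf.
have mf := measurable_realfun.continuous_measurable_fun cf.
have -> : [set: R] = `]-oo, 0[ `|` `[0, +oo[.
  apply/seteqP; split => x //= _.
  rewrite !in_itv /= andbT.
  by case: (ltP x 0) => h; [left|right].
rewrite ge0_integral_setU //=; last 3 first.
- apply/measurable_EFinP; exact: measurable_funS mf.
- by move=> x _; rewrite lee_fin.
- apply/disj_setPS => x [] /=; rewrite !in_itv /= andbT => h1 h2.
  by move: (lt_le_trans h1 h2); rewrite ltxx.
rewrite addeC; congr (_ + _)%E.
rewrite integral_itv_bndo_bndc; last by apply/measurable_EFinP; exact: measurable_funS mf.
have := @ge0_integration_by_substitutionNy R f 0.
rewrite oppr0 => ->//; exact: continuous_subspaceT.
Qed.

Definition fC (u v x : R) := cauchy_density x / ((u - x)^+2 + v^+2).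

Lemma fC_ge0 u v x : 0 <= fC u v x.
Proof.
have pi0 : (0:R) <= pi := ltW (@pi_gt0 R).
rewrite /fC /cauchy_density; apply: divr_ge0.
  by rewrite invr_ge0; apply: mulr_ge0 => //; rewrite addr_ge0 // sqr_ge0.
by rewrite addr_ge0 // sqr_ge0.


Qed.

Lemma fC_cont u v : 0 < v -> continuous (fC u v).
Proof.
move=> v0 x.
have P0 : pi * (1 + x^+2) != 0.
  by rewrite mulf_neq0 // gt_eqF // ?pi_gt0 // ltr_pwDl // sqr_ge0.
have Q0 : (u - x)^+2 + v^+2 != 0.
  by rewrite gt_eqF // ltr_wpDl ?sqr_ge0 // exprn_gt0.
have d1 := @is_deriveV R (fun y => pi * (1 + y^+2)) x _ 1 P0.
have d2 := @is_deriveV R (fun y => (u - y)^+2 + v^+2) x _ 1 Q0.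
have dg : derivable (fC u v) x 1 by rewrite /fC /cauchy_density; apply: ex_derive.
exact/differentiable_continuous/derivable1_diffP.
Qed.

Definition F0 (x : R) := pi^-1 * ((x / (1 + x^+2) + atan x) / 2).

Lemma dF0 (x : R) : is_derive x 1 F0 (fC 0 1 x).
Proof.
have P0 : 1 + x^+2 != 0 by rewrite gt_eqF // ltr_pwDl // sqr_ge0.
have d1 := @is_deriveV R (fun y => 1 + y^+2) x _ 1 P0.
rewrite /F0 /fC /cauchy_density; apply: is_derive_eq.
rewrite !sc.
have pi0 : pi != 0 :> R by rewrite gt_eqF // pi_gt0.
move: pi0; generalize (@pi R) => p pi0.
rewrite sub0r sqrrN expr1n.
by field; rewrite addrC P0 pi0.
Qed.

Lemma cvg_xP : (fun x : R => x / (1 + x^+2)) @ +oo --> (0:R).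
Proof.
pose g := fun y : R => y / (y^+2 + 1).
have g0 : g 0 = 0 by rewrite /g mul0r.
have cg : g y @[y --> (0:R)] --> g 0.
  have Q00 : (0:R)^+2 + 1 != 0 by rewrite expr0n /= add0r oner_neq0.
  have dV := @is_deriveV R (fun y => y^+2 + 1) 0 _ 1 Q00.
  have dg : derivable g 0 1 by apply: ex_derive.
  exact/differentiable_continuous/derivable1_diffP.
have : (g \o (fun x : R => x^-1)) @ +oo --> g 0.
  by apply: cvg_comp; [exact: cvg_invy|exact: cg].
rewrite g0; apply: cvg_trans; apply: near_eq_cvg.
near=> x.
have x0 : 0 < x by near: x; apply: nbhs_pinfty_gt; rewrite num_real.
have P0 : 0 < 1 + x^+2 by rewrite ltr_pwDl // sqr_ge0.
rewrite /g /=; field.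
by rewrite gt_eqF // gt_eqF.
Unshelve. all: by end_near. Qed.

Lemma cvgF0 : F0 x @[x --> +oo] --> pi^-1 * ((0 + pi / 2) / 2).
Proof.
rewrite /F0; apply: cvgMl_tmp; apply: cvgMr_tmp; apply: cvgD.
- exact: cvg_xP.
- exact: cvgy_atan.
Qed.

Lemma G_val (u v : R) : 0 < v ->
  cauchy_G u v = ((1 + v) / (v * (u^+2 + (1 + v)^+2)))%:E.
Proof.
move=> v0.
rewrite /cauchy_G.
change (fun x => (cauchy_density x / ((u - x) ^+ 2 + v ^+ 2))%:E) with (fun x => (fC u v x)%:E).
rewrite (intR (@fC_ge0 u v) (@fC_cont u v v0)).
have -> : (fun x => (fC u v (-x))%:E) = (fun x => (fC (-u) v x)%:E).
  apply/funext => x; rewrite /fC /cauchy_density sqrrN.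
  by rewrite -opprD sqrrN opprK.
have [K0|K0] := eqVneq ((u^+2 + v^+2 - 1)^+2 + 4 * u^+2) 0.
- have h1 : 0 <= (u^+2+v^+2-1)^+2 := sqr_ge0 _.
  have h2 : 0 <= 4 * u^+2 by rewrite mulr_ge0 // sqr_ge0.
  move/eqP: K0; rewrite paddr_eq0 // => /andP[/eqP].
  move=> h; rewrite mulf_eq0 pnatr_eq0 /= sqrf_eq0 => /eqP u0.
  move/eqP: h; rewrite u0 expr0n /= add0r sqrf_eq0 subr_eq0.
  rewrite -[X in _ == X](expr1n _ 2) eqf_sqr => /orP[/eqP v1|/eqP v1]; last first.
    by move: v0; rewrite v1 ltr0N1.
  subst u v; rewrite oppr0.
  rewrite (ftc0 (@fC_ge0 0 1) (@fC_cont 0 1 ltr01) dF0 cvgF0) -EFinD; congr (_%:E).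
  rewrite /F0 atan0.
  have pi0 : pi != 0 :> R by rewrite gt_eqF // pi_gt0.
  move: pi0; generalize (@pi R) => p pi0.
  by field.
- have K0' : ((- u)^+2 + v^+2 - 1)^+2 + 4 * (- u)^+2 != 0 by rewrite sqrrN.
  rewrite (ftc0 (@fC_ge0 u v) (@fC_cont u v v0) (fun x => @dFF u v x v0 K0) (@cvgFF u v v0)).
  rewrite (ftc0 (@fC_ge0 (-u) v) (@fC_cont (-u) v v0) (fun x => @dFF (-u) v x v0 K0') (@cvgFF (-u) v v0)).
  rewrite -EFinD; congr (_%:E).
  rewrite /FF !expr0n /= !addr0 ln1 !sub0r !sqrrN !opprK !mulNr atanN atan0.
  have pi0 : pi != 0 :> R by rewrite gt_eqF // pi_gt0.
  have Q0 : u^+2 + (1 + v)^+2 != 0 by rewrite gt_eqF // ltr_wpDl ?sqr_ge0 // exprn_gt0 // ltr_wpDl.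
  move: pi0; generalize (@pi R) => p pi0.
  by field; rewrite Q0 K0 pi0 gt_eqF.
Qed.
End S.

Section T.
Variables (R : realType) (t : R).
Hypothesis ht : 0 < t.

Definition Pc (u v : R) := v^+3 + 2 * v^+2 + (1 - t + u^+2) * v - t.

Lemma G_le_iff u v : 0 < v -> (cauchy_G u v <= (t^-1)%:E)%E <-> 0 <= Pc u v.
Proof.
move=> v0; rewrite G_val // lee_fin.
have D0 : 0 < v * (u^+2 + (1 + v)^+2).
  by rewrite mulr_gt0 // ltr_wpDl ?sqr_ge0 // exprn_gt0 // ltr_wpDl.
rewrite ler_pdivrMr // mulrC ler_pdivlMr // -subr_ge0.
have -> : v * (u ^+ 2 + (1 + v) ^+ 2) - (1 + v) * t = Pc u v by rewrite /Pc; ring.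
by [].
Qed.

Lemma Pc_eq_iff u v : 0 < v ->
  (u ^+ 2 = v^-1 * (1 + v) * (t - v - v ^+ 2)) <-> Pc u v = 0.
Proof.
move=> v0; have v0' : v != 0 by rewrite gt_eqF.
split => h.
  by rewrite /Pc h; field.
have -> : u^+2 = (Pc u v - (v^+3 + 2 * v^+2 + (1 - t) * v - t)) / v.
  by rewrite /Pc; field.
by rewrite h; field.
Qed.

Lemma Pc_sign u v w : 0 < w -> Pc u w = 0 ->
  Pc u v = (v - w) * (v^+2 + v * w + 2 * v + t / w).
Proof.
move=> w0 hw; have w0' : w != 0 by rewrite gt_eqF.
have -> : Pc u v = (v - w) * (v^+2 + v * w + 2 * v + t / w) + (1 + (v - w) / w) * Pc u w.
  by rewrite /Pc; field.
by rewrite hw mulr0 addr0.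
Qed.

Lemma Pc_two u1 u2 v1 v2 : 0 < v2 -> Pc u1 v1 = 0 -> Pc u2 v2 = 0 ->
  (v2 - v1) * (v1 * v2 + v1^+2 + 2 * v1 + t / v2) = - v1 * (u2^+2 - u1^+2).
Proof.
move=> v20 h1 h2; have v0' : v2 != 0 by rewrite gt_eqF.
have : Pc u2 v2 - Pc u1 v1 - (v2 - v1) / v2 * Pc u2 v2
   = (v2 - v1) * (v1 * v2 + v1^+2 + 2 * v1 + t / v2) + v1 * (u2^+2 - u1^+2).
  by rewrite /Pc; field.
rewrite h1 h2 !mulr0 !subr0 => /eqP; rewrite eq_sym addr_eq0 => /eqP ->.
by rewrite mulNr.
Qed.

Lemma Pc_root u : exists2 v, 0 < v & Pc u v = 0.
Proof.
have cP : {within `[0, t + 1], continuous (Pc u)}.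
  apply: continuous_subspaceT => x.
  have dg : derivable (Pc u) x 1 by rewrite /Pc; apply: ex_derive.
  exact/differentiable_continuous/derivable1_diffP.
have P0 : Pc u 0 = - t by rewrite /Pc; ring.
have P1 : 0 < Pc u (t + 1).
  have -> : Pc u (t + 1) = t^+3 + 4 * t^+2 + 6 * t + 4 + u^+2 * (t + 1).
    by rewrite /Pc; ring.
  have h1 : 0 <= u^+2 * (t + 1) by rewrite mulr_ge0 ?sqr_ge0 // ltW // ltr_pwDl.
  have h2 := exprn_gt0 3 ht; have h3 := exprn_gt0 2 ht.
  have h4 : 0 < t^+3 + 4 * t^+2 + 6 * t + 4 by rewrite !addr_gt0 // mulr_gt0.
  by apply: (lt_le_trans h4); rewrite lerDl.
have t1 : (0:R) <= t + 1 by have := ht; lra.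
have [c cI Pc0] : exists2 c, c \in `[0, t + 1] & Pc u c = 0.
  apply: IVT => //.
  rewrite P0 ge_min le_max; apply/andP; split.
    by rewrite oppr_le0 ltW.
  by rewrite (ltW P1) orbT.
exists c => //.
move: cI; rewrite in_itv /= => /andP[c0 _].
rewrite lt_neqAle c0 andbT; apply/eqP => c0'.
by move: Pc0; rewrite -c0' P0 => /eqP; rewrite oppr_eq0 gt_eqF.
Qed.

Lemma B_gt0 v w : 0 < v -> 0 < w -> 0 < v^+2 + v * w + 2 * v + t / w.
Proof.
move=> v0 w0.
have h1 : 0 < t / w by rewrite divr_gt0.
have h2 : 0 < v * w by rewrite mulr_gt0.
have h3 : 0 < v^+2 by rewrite exprn_gt0.
by rewrite !addr_gt0 // mulr_gt0.
Qed.

Lemma vt_eq u w : 0 < w -> Pc u w = 0 -> v_t t u = w.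
Proof.
move=> w0 hw.
set S := [set v : R | 0 < v /\ (cauchy_G u v <= (t^-1)%:E)%E].
have SP : forall v, S v <-> w <= v.
  move=> v; split.
  - case=> v0 /(G_le_iff u v0); rewrite (Pc_sign v w0 hw).
    by rewrite pmulr_lge0 ?B_gt0 // subr_ge0.
  - move=> wv; have v0 : 0 < v by apply: lt_le_trans wv.
    split => //; apply/(G_le_iff u v0); rewrite (Pc_sign v w0 hw).
    by rewrite mulr_ge0 // ?subr_ge0 // ltW // B_gt0.
have Sw : S w by apply/SP.
rewrite /v_t -/S; apply/eqP; rewrite eq_le; apply/andP; split.
- apply: ge_inf => //; exists w => v /SP //.
- by apply: lb_le_inf; [exists w | move=> v /SP].
Qed.

Lemma vt_spec u : 0 < v_t t u /\ Pc u (v_t t u) = 0.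
Proof. by have [w w0 hw] := Pc_root u; rewrite (vt_eq w0 hw). Qed.

Lemma alg_q (q w k u : R) : k != 0 -> q != 0 ->
  - w * (2 * u + k) / q = k^-1 * (- w * ((k + u) ^+ 2 - u ^+ 2) / q).
Proof. by move=> k0 q0; field; rewrite k0 q0. Qed.

Notation V := (v_t t).

Definition Qf u x := V u * V x + V u ^+ 2 + 2 * V u + t / V x.

Lemma Qf_ge u x : V u ^+ 2 < Qf u x.
Proof.
have [v0 _] := vt_spec u; have [x0 _] := vt_spec x.
have h1 : 0 < V u * V x by rewrite mulr_gt0.
have h2 : 0 < 2 * V u by rewrite mulr_gt0.
have h3 : 0 < t / V x by rewrite divr_gt0.
rewrite /Qf; lra.
Qed.

Lemma Qf_gt0 u x : 0 < Qf u x.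
Proof.
have [v0 _] := vt_spec u.
by apply: lt_trans (Qf_ge u x); rewrite exprn_gt0.
Qed.

Lemma V_key u x : V x - V u = - V u * (x ^+ 2 - u ^+ 2) / Qf u x.
Proof.
have [v0 h0] := vt_spec u; have [x0 hx] := vt_spec x.
have := Pc_two x0 h0 hx; rewrite -/(Qf u x) => <-.
by rewrite mulfK // gt_eqF // Qf_gt0.
Qed.

Lemma V_cont u : V x @[x --> u] --> V u.
Proof.
have [v0 _] := vt_spec u.
have c2 : (fun x : R => x ^+ 2) x @[x --> u] --> u ^+ 2 by apply: exprn_continuous.
apply/cvgrPdist_le => e e0.
near=> x.
have hx : `|u^+2 - x^+2| <= e * V u.
  near: x; move/cvgrPdist_le: c2; apply; exact: mulr_gt0.
rewrite distrC V_key !normrM normrN normfV (gtr0_norm (Qf_gt0 u x)) (gtr0_norm v0).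
rewrite ler_pdivrMr ?Qf_gt0 //.
rewrite distrC in hx.
have hQ := Qf_ge u x.
apply: (le_trans (y := V u * (e * V u))).
  by rewrite ler_pM2l.
by rewrite mulrCA -expr2 ler_pM2l // ltW.
Unshelve. all: by end_near. Qed.

Lemma V_is_derive (u : R) : is_derive u 1 V (- V u * (2 * u + 0) / Qf u u).
Proof.
have [v0 _] := vt_spec u.
have cVs : V (h + u) @[h --> 0^'] --> V u.
  have hu : (h + u) @[h --> (0:R)] --> u.
    by rewrite -{2}(add0r u); apply: cvgD; [exact: cvg_id|exact: cvg_cst].
  have H := (cvg_comp (fun h => h + u) V hu (@V_cont u)).
  exact: cvg_within_filter H.
have cQ : Qf u (h + u) @[h --> 0^'] --> Qf u u.
  rewrite /Qf; apply: cvgD; [apply: cvgD; [apply: cvgD|]|].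
  - by apply: cvgMl_tmp.
  - exact: cvg_cst.
  - exact: cvg_cst.
  - apply: cvgMl_tmp; apply: cvgV; [by rewrite gt_eqF|exact: cVs].
have cg : (- V u * (2 * u + h) / Qf u (h + u)) @[h --> 0^'] --> (- V u * (2 * u + 0) / Qf u u).
  apply: cvgM.
    apply: cvgMl_tmp; apply: cvgD; first exact: cvg_cst.
    exact: cvg_within_filter cvg_id.
  by apply: cvgV; [rewrite gt_eqF // Qf_gt0|exact: cQ].
have lim : (fun h => h^-1 *: ((V \o shift u) (h *: 1) - V u)) @ 0^' --> (- V u * (2 * u + 0) / Qf u u).
  apply: cvg_trans cg; apply: near_eq_cvg; near=> h.
  have h0 : h != 0 by near: h; exact: nbhs_dnbhs_neq.
  rewrite /= !sc mulr1 V_key.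
  have hQ : Qf u (h + u) != 0 by rewrite gt_eqF // Qf_gt0.
  exact: alg_q.
apply: DeriveDef; first by apply/cvg_ex; eexists; exact: lim.
by rewrite /derive; exact: cvg_lim lim.
Unshelve. all: by end_near. Qed.

Lemma V_lt_of_sq u1 u2 : u2 ^+ 2 < u1 ^+ 2 -> V u1 < V u2.
Proof.
move=> h; have [v1 _] := vt_spec u1.
rewrite -subr_gt0 V_key mulNr -mulrN divr_gt0 ?Qf_gt0 // mulr_gt0 //.
by rewrite oppr_gt0 subr_lt0.
Qed.

Lemma main_sec :
  (forall u : R,
     0 < v_t t u /\
     u ^+ 2 = (v_t t u)^-1 * (1 + v_t t u) * (t - v_t t u - v_t t u ^+ 2) /\
     (forall v : R, 0 < v -> u ^+ 2 = v^-1 * (1 + v) * (t - v - v ^+ 2) ->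
        v = v_t t u)) /\
  (forall u : R, derivable (v_t t) u 1) /\
  (forall u : R, u != 0 -> u * derive1 (v_t t) u < 0) /\
  (forall u1 u2 : R, u1 < u2 -> u2 <= 0 -> v_t t u1 < v_t t u2) /\
  (forall u1 u2 : R, 0 <= u1 -> u1 < u2 -> v_t t u2 < v_t t u1) /\
  v_t t 0 = (-1 + Num.sqrt (1 + 4 * t)) / 2.
Proof.
split.
  move=> u; have [v0 hv] := vt_spec u.
  split => //; split; first by apply/Pc_eq_iff.
  by move=> v w0 /(Pc_eq_iff _ w0) hw; rewrite (vt_eq w0 hw).
split; first by move=> u; case: (V_is_derive u).
split.
  move=> u u0; rewrite derive1E (@derive_val _ _ _ _ _ _ _ (V_is_derive u)).
  have [v0 _] := vt_spec u.
  have Q0 := Qf_gt0 u u.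
  have -> : u * (- V u * (2 * u + 0) / Qf u u) = - (2 * (u ^+ 2 * V u) / Qf u u).
    by rewrite addr0; ring.
  rewrite oppr_lt0 divr_gt0 // mulr_gt0 // mulr_gt0 //.
  by rewrite exprn_even_gt0 //= u0.
split.
  move=> u1 u2 h12 h2; apply: V_lt_of_sq.
  rewrite !expr2; nra.
split.
  move=> u1 u2 h1 h12; apply: V_lt_of_sq.
  rewrite !expr2; nra.
set s := Num.sqrt (1 + 4 * t).
have t4 : 0 <= 1 + 4 * t by have := ht; lra.
have s2 : s ^+ 2 = 1 + 4 * t by rewrite sqr_sqrtr.
have s1 : 1 < s by rewrite /s -[X in X < _]sqrtr1 ltr_sqrt; have := ht; lra.
apply: vt_eq; first by lra.
have -> : Pc 0 ((-1 + s) / 2) = ((-1 + s) / 2 + 1) * ((s ^+ 2 - 1 - 4 * t) / 4).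
  by rewrite /Pc; field.
by rewrite s2 (_ : 1 + 4 * t - 1 - 4 * t = 0) ?mul0r ?mulr0 //; ring.
Qed.
End T.

End Helpers.

Theorem lemma6p3 (R : realType) (t : R) (ht : 0 < t) :
  (forall u : R,
     0 < v_t t u /\
     u ^+ 2 = (v_t t u)^-1 * (1 + v_t t u) * (t - v_t t u - v_t t u ^+ 2) /\
     (forall v : R, 0 < v -> u ^+ 2 = v^-1 * (1 + v) * (t - v - v ^+ 2) ->
        v = v_t t u)) /\
  (forall u : R, derivable (v_t t) u 1) /\
  (forall u : R, u != 0 -> u * derive1 (v_t t) u < 0) /\
  (forall u1 u2 : R, u1 < u2 -> u2 <= 0 -> v_t t u1 < v_t t u2) /\
  (forall u1 u2 : R, 0 <= u1 -> u1 < u2 -> v_t t u2 < v_t t u1) /\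
  v_t t 0 = (-1 + Num.sqrt (1 + 4 * t)) / 2.
Proof. exact: (@Helpers.main_sec R t ht). Qed.
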